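(* Consider the Long-Short-Range Message-Passing (LSR-MP) architecture described in the context. Suppose that (i) the short-range module is rotation-invariant in its scalar output, i.e. $\textsc{Short}_h(Z, R\vec p) = \textsc{Short}_h(Z,\vec p)$ for all $R\in SO(3)$, and its vectorial output transforms by rotation, $\textsc{Short}_v(Z,R\vec p) = R\,\textsc{Short}_v(Z,\vec p)$; and (ii) the long-range bipartite module is rotation-invariant in its scalar output, i.e. for all $R\in SO(3)$ and all inputs, $$\textsc{Long}_x(h,H,x^0,R\vec\mu^0,R\vec p,R\vec V,R\vec P)=\textsc{Long}_x(h,H,x^0,\vec\mu^0,\vec p,\vec V,\vec P).$$ Then the scalar output $h_{\text{out}}$ of the LSR-MP architecture is rotation-invariant: replacing every atomic position $\vec p_i$ by $R\vec p_i$ (for any $R\in SO(3)$) leaves $h_{\text{out}}$ unchanged.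
   Context: A molecule has $n$ atoms with atomic numbers $Z=(z_1,\dots,z_n)$ and positions $\vec p_1,\dots,\vec p_n\in\mathbb{R}^3$; a rotation $R\in SO(3)$ acts by $\vec p_i\mapsto R\vec p_i$ and on a vectorial embedding $\vec w\in\mathbb{R}^{3\times d}$ by $\vec w\mapsto R\vec w$. Scalar embeddings lie in $\mathbb{R}^d$. LSR-MP consists of: (1) a short-range module, a map $(Z,\vec p)\mapsto (h,\vec v)=(\textsc{Short}_h(Z,\vec p),\textsc{Short}_v(Z,\vec p))$ producing for each atom $i$ a scalar embedding $h_i\in\mathbb{R}^d$ and a vectorial embedding $\vec v_i\in\mathbb{R}^{3\times d}$. (2) A fragmentation module: a fixed assignment of the atoms into fragments $S(1),\dots,S(m)\subseteq\{1,\dots,n\}$, and fragment embeddings $H_j=\sum_{i\in S(j)}\alpha_i\odot h_i$, $\vec V_j=\sum_{i\in S(j)}\beta_i\odot\vec v_i$, $\vec P_j=\sum_{i\in S(j)}\gamma_i\vec p_i$, where $\alpha_i,\beta_i\in\mathbb{R}^d$ (acting channelwise, $\odot$ the Hadamard product) and $\gamma_i\in\mathbb{R}$ are fixed weights not affected by the rotation. (3) A long-range bipartite module: initial long-range embeddings $x^0_i=\textsc{Dense}(h_i)$, $\vec\mu^0_i=U(\vec v_i)$, and a map producing long-range scalar embeddings $x=\textsc{Long}_x(h,H,x^0,\vec\mu^0,\vec p,\vec V,\vec P)$ and vectorial embeddings $\vec\mu=\textsc{Long}_\mu(h,H,x^0,\vec\mu^0,\vec p,\vec V,\vec P)$. (4)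 Outputs $h_{\text{out}}=\textsc{Dense}([h,x])$ and $\vec v_{\text{out}}=U([\vec v,\vec\mu])$, where $[\cdot,\cdot]$ is channel concatenation, $\textsc{Dense}$ is a linear layer with bias followed by an activation acting on scalar features, and $U$ is a linear map without bias acting only on the channel dimension (so $U(R\vec w)=RU(\vec w)$). *)

(* Defs.v *)
From HB Require Import structures.
From mathcomp Require Import all_boot all_order all_algebra.
From mathcomp Require Import reals.
Set Implicit Arguments. Unset Strict Implicit. Unset Printing Implicit Defensive.
Import Order.TTheory GRing.Theory Num.Theory.
Local Open Scope ring_scope.

(* Positions are column vectors 'cV_3; vectorial embeddings are 3 x d
   matrices; scalar embeddings are row vectors 'rV_d.  A rotation Q acts
   by left multiplication Q *m _. *)

Definition SO3 {R : realType} (Q : 'M[R]_3) : bool :=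
  (Q *m Q^T == 1%:M) && (\det Q == 1).

Definition hadr {R : realType} {d : nat} (a b : 'rV[R]_d) : 'rV[R]_d :=
  \row_k (a 0 k * b 0 k).

Definition hadv {R : realType} {d : nat} (a : 'rV[R]_d) (w : 'M[R]_(3, d))
  : 'M[R]_(3, d) := \matrix_(r, k) (a 0 k * w r k).

Definition Dense {R : realType} {k l : nat} (W : 'M[R]_(k, l)) (b : 'rV[R]_l)
  (sigma : R -> R) (u : 'rV[R]_k) : 'rV[R]_l :=
  map_mx sigma (u *m W + b).

Definition Ulin {R : realType} {k l : nat} (M : 'M[R]_(k, l))
  (w : 'M[R]_(3, k)) : 'M[R]_(3, l) := w *m M.

(* Scalar output h_out of the LSR-MP architecture for a molecule (Z, p).
   d : short-range channels, e : long-range initial channels,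
   f : long-range scalar output channels, g : output channels. *)
Definition lsrmp_hout {R : realType} {n m d e f g : nat}
  (Short_h : ('I_n -> nat) -> ('I_n -> 'cV[R]_3) -> 'I_n -> 'rV[R]_d)
  (Short_v : ('I_n -> nat) -> ('I_n -> 'cV[R]_3) -> 'I_n -> 'M[R]_(3, d))
  (S : 'I_m -> {set 'I_n})
  (alpha beta : 'I_n -> 'rV[R]_d) (gamma : 'I_n -> R)
  (W0 : 'M[R]_(d, e)) (b0 : 'rV[R]_e) (sigma0 : R -> R)
  (U0 : 'M[R]_(d, e))
  (Long_x : ('I_n -> 'rV[R]_d) -> ('I_m -> 'rV[R]_d) -> ('I_n -> 'rV[R]_e) ->
            ('I_n -> 'M[R]_(3, e)) -> ('I_n -> 'cV[R]_3) ->
            ('I_m -> 'M[R]_(3, d)) -> ('I_m -> 'cV[R]_3) -> 'I_n -> 'rV[R]_f)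
  (W1 : 'M[R]_(d + f, g)) (b1 : 'rV[R]_g) (sigma1 : R -> R)
  (Z : 'I_n -> nat) (p : 'I_n -> 'cV[R]_3) : 'I_n -> 'rV[R]_g :=
  let h := Short_h Z p in
  let v := Short_v Z p in
  let H := fun j => \sum_(i in S j) hadr (alpha i) (h i) in
  let V := fun j => \sum_(i in S j) hadv (beta i) (v i) in
  let P := fun j => \sum_(i in S j) gamma i *: p i in
  let x0 := fun i => Dense W0 b0 sigma0 (h i) in
  let mu0 := fun i => Ulin U0 (v i) in
  let x := Long_x h H x0 mu0 p V P in
  fun i => Dense W1 b1 sigma1 (row_mx (h i) (x i)).

(* Main.v *)
Require Import Defs.
From HB Require Import structures.
From mathcomp Require Import all_boot all_order all_algebra.
From mathcomp Require Import reals.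
From Stdlib Require Import FunctionalExtensionality.
Import Order.TTheory GRing.Theory Num.Theory.
Local Open Scope ring_scope.

Theorem proposition1 (R : realType) (n m d e f g : nat)
  (Short_h : ('I_n -> nat) -> ('I_n -> 'cV[R]_3) -> 'I_n -> 'rV[R]_d)
  (Short_v : ('I_n -> nat) -> ('I_n -> 'cV[R]_3) -> 'I_n -> 'M[R]_(3, d))
  (S : 'I_m -> {set 'I_n})
  (alpha beta : 'I_n -> 'rV[R]_d) (gamma : 'I_n -> R)
  (W0 : 'M[R]_(d, e)) (b0 : 'rV[R]_e) (sigma0 : R -> R)
  (U0 : 'M[R]_(d, e))
  (Long_x : ('I_n -> 'rV[R]_d) -> ('I_m -> 'rV[R]_d) -> ('I_n -> 'rV[R]_e) ->
            ('I_n -> 'M[R]_(3, e)) -> ('I_n -> 'cV[R]_3) ->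
            ('I_m -> 'M[R]_(3, d)) -> ('I_m -> 'cV[R]_3) -> 'I_n -> 'rV[R]_f)
  (W1 : 'M[R]_(d + f, g)) (b1 : 'rV[R]_g) (sigma1 : R -> R)
  (short_h_inv : forall (Q : 'M[R]_3) Z p, SO3 Q ->
     Short_h Z (fun i => Q *m p i) = Short_h Z p)
  (short_v_equiv : forall (Q : 'M[R]_3) Z p, SO3 Q ->
     Short_v Z (fun i => Q *m p i) = (fun i => Q *m Short_v Z p i))
  (long_x_inv : forall (Q : 'M[R]_3) h H x0 mu0 p V P, SO3 Q ->
     Long_x h H x0 (fun i => Q *m mu0 i) (fun i => Q *m p i)
            (fun j => Q *m V j) (fun j => Q *m P j)
     = Long_x h H x0 mu0 p V P) :
  forall (Q : 'M[R]_3) (Z : 'I_n -> nat) (p : 'I_n -> 'cV[R]_3), SO3 Q ->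
    lsrmp_hout Short_h Short_v S alpha beta gamma W0 b0 sigma0 U0 Long_x
      W1 b1 sigma1 Z (fun i => Q *m p i)
    = lsrmp_hout Short_h Short_v S alpha beta gamma W0 b0 sigma0 U0 Long_x
      W1 b1 sigma1 Z p.
Proof.
move=> Q Z p HQ.
rewrite /lsrmp_hout /= short_h_inv // short_v_equiv //.
set v := Short_v Z p.
have eV : (fun j => \sum_(i in S j) hadv (beta i) (Q *m v i))
          = (fun j => Q *m \sum_(i in S j) hadv (beta i) (v i)).
  apply: functional_extensionality => j.
  rewrite mulmx_sumr; apply: eq_bigr => i _.
  apply/matrixP => r k; rewrite !mxE /= big_distrr /=.
  apply: eq_bigr => l _; rewrite !mxE mulrCA.
  by [].
have eP : (fun j => \sum_(i in S j) gamma i *: (Q *m p i))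
          = (fun j => Q *m \sum_(i in S j) gamma i *: p i).
  apply: functional_extensionality => j.
  rewrite mulmx_sumr; apply: eq_bigr => i _.
  by rewrite scalemxAr.
have eM : (fun i => Ulin U0 (Q *m v i)) = (fun i => Q *m Ulin U0 (v i)).
  apply: functional_extensionality => i.
  by rewrite /Ulin mulmxA.
rewrite eV eP eM long_x_inv //.
Qed.
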